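(* Let $m,u\in\mathbb{Q}$ with $m>0$, $u>0$, $mu<1$, and put $n=m(m^2+1)\bigl(2u-m(u^2-1)\bigr)$. Define $$Q_{m,u}(t)=4m\,(mu^2-m-2u)\,(mt^2-2t-m)\Bigl[(mu^2-m-2u)t^2+(-4mu-2u^2+2)t-mu^2+m+2u\Bigr].$$ (i) Sending a triangle to the rational angle parameter $t$ of its angle $\alpha$ gives a bijection between hyperbolic Heron triangles (up to congruence respecting the labelling of vertices) whose area has rational parameter $m$ and whose angle $\beta$ has rational parameter $u$, and the rational numbers $t$ with $$0<t<\frac{1-mu}{m+u}\qquad\text{(condition (A))}$$ for which $Q_{m,u}(t)=w^2$ for some rational $w>0$. Here $w=(m^2+1)(u^2+1)(t^2+1)\,\sinh(a)\sin(\beta)\sin(\gamma)$. (ii) The affine curve $w^2=Q_{m,u}(t)$ is birational over $\mathbb{Q}$ to the elliptic curve $$E_{m,u}:\ y^2=x\,(x-n)\,\bigl(x-n(u^2+1)\bigr),$$ via a birational map under which $$x=\frac{2u-m(u^2-1)}{4t^2}\Bigl[-4(mu-1)(m+u)mt+2(m^2u^2+m^2-2mu+2)mt^2+2\bigl(2u-m(u^2-1)\bigr)m^2+mw\Bigr],$$ $$t=-\frac{m\bigl(2u-m(u^2-1)\bigr)\bigl(x-(m+u)^2(m^2+1)\bigr)}{y+(m+u)(1-mu)(x-n)}.$$ Consequently these hyperbolic Heron triangles are in one-to-one correspondence with the rational points $(x,y)$ of $E_{m,u}$ off the line $y+(m+u)(1-mu)(x-n)=0$ that satisfy condition (A) for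 the value of $t$ above (together with the sign condition corresponding to $w>0$), with at most one further explicit point of $E_{m,u}$, namely $P=\bigl((m^2+1)(m+u)^2,\;u^2(m^2+1)^2(m+u)(mu-1)\bigr)$, possibly arising from the line.
   Context: All triangles are non-degenerate, bounded triangles in the hyperbolic plane (curvature $-1$), with side lengths $a,b,c>0$, opposite angles $\alpha,\beta,\gamma>0$, and area $A=\pi-\alpha-\beta-\gamma$. A length $x$ is called rational if $e^x\in\mathbb{Q}$; an angle or area $x$ is called rational if $e^{ix}\in\mathbb{Q}[i]$, i.e. $\cos x,\sin x\in\mathbb{Q}$. A hyperbolic Heron triangle is one with $e^a,e^b,e^c\in\mathbb{Q}$ and $e^{i\alpha},e^{i\beta},e^{i\gamma},e^{iA}\in\mathbb{Q}[i]$. For a rational angle or area $x\in(0,\pi)$, its rational parameter is the unique $t\in\mathbb{Q}$, $t>0$, with $\cos x=\frac{1-t^2}{1+t^2}$ and $\sin x=\frac{2t}{1+t^2}$ (i.e. $t=\tan(x/2)$); ''rational area $m$'' means the area has rational parameter $m$, and ''rational angle $u$'' means the angle has rational parameter $u$. *)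

(* Defs.v *)
From Stdlib Require Import Reals QArith Qreals.
Open Scope R_scope.

Definition IsRatR (x : R) : Prop := exists q : Q, x = Q2R q.

(** rational length: e^x in Q ; rational angle/area: e^{ix} in Q[i] *)
Definition rat_len (x : R) : Prop := IsRatR (exp x).
Definition rat_ang (x : R) : Prop := IsRatR (cos x) /\ IsRatR (sin x).

(** A (labelled) hyperbolic triangle up to congruence is given by its side
    lengths (a,b,c) (SSS), which must satisfy the strict triangle
    inequalities. *)
Definition htri (a b c : R) : Prop :=
  0 < a /\ 0 < b /\ 0 < c /\ a < b + c /\ b < c + a /\ c < a + b.

(** Angle opposite the side x, the other two sides being y and z
    (hyperbolic law of cosines, curvature -1). *)
Definition hangle (x y z : R) : R :=
  acos ((cosh y * cosh z - cosh x) / (sinh y * sinh z)).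

Definition alpha (a b c : R) : R := hangle a b c.
Definition beta  (a b c : R) : R := hangle b c a.
Definition gamma (a b c : R) : R := hangle c a b.
Definition harea (a b c : R) : R := PI - alpha a b c - beta a b c - gamma a b c.

Definition rparam (x : R) : R := tan (x / 2).

Definition heron (a b c : R) : Prop :=
  htri a b c /\ rat_len a /\ rat_len b /\ rat_len c /\
  rat_ang (alpha a b c) /\ rat_ang (beta a b c) /\ rat_ang (gamma a b c) /\
  rat_ang (harea a b c).

Definition heron_mu (m u a b c : R) : Prop :=
  heron a b c /\ rparam (harea a b c) = m /\ rparam (beta a b c) = u.

Definition condA (m u t : R) : Prop := 0 < t /\ t < (1 - m * u) / (m + u).

Definition Qmu (m u t : R) : R :=
  4 * m * (m * u ^ 2 - m - 2 * u) * (m * t ^ 2 - 2 * t - m) *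
  ((m * u ^ 2 - m - 2 * u) * t ^ 2 + (- 4 * m * u - 2 * u ^ 2 + 2) * t
   - m * u ^ 2 + m + 2 * u).

Definition wtri (m u a b c : R) : R :=
  (m ^ 2 + 1) * (u ^ 2 + 1) * (rparam (alpha a b c) ^ 2 + 1) *
  sinh a * sin (beta a b c) * sin (gamma a b c).

Definition Kmu (m u : R) : R := 2 * u - m * (u ^ 2 - 1).
Definition nmu (m u : R) : R := m * (m ^ 2 + 1) * Kmu m u.

Definition onE (m u x y : R) : Prop :=
  y ^ 2 = x * (x - nmu m u) * (x - nmu m u * (u ^ 2 + 1)).

Definition lineL (m u x y : R) : R := y + (m + u) * (1 - m * u) * (x - nmu m u).

(** x-coordinate of P *)
Definition cmu (m u : R) : R := (m ^ 2 + 1) * (m + u) ^ 2.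

(** the birational map (t,w) |-> (x,y) : x as in the paper, y obtained by
    solving the paper's formula for t with respect to y *)
Definition xfun (m u t w : R) : R :=
  Kmu m u / (4 * t ^ 2) *
  (- 4 * (m * u - 1) * (m + u) * m * t
   + 2 * (m ^ 2 * u ^ 2 + m ^ 2 - 2 * m * u + 2) * m * t ^ 2
   + 2 * Kmu m u * m ^ 2 + m * w).
Definition yfun (m u t w : R) : R :=
  - m * Kmu m u * (xfun m u t w - cmu m u) / t
  - (m + u) * (1 - m * u) * (xfun m u t w - nmu m u).

(** the inverse map (x,y) |-> (t,w): t as in the paper, w obtained by
    solving the paper's formula for x with respect to w *)
Definition tfun (m u x y : R) : R :=
  - (m * Kmu m u * (x - cmu m u)) / lineL m u x y.
Definition wfun (m u x y : R) : R :=
  let t := tfun m u x y in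
  (4 * t ^ 2 * x / Kmu m u + 4 * (m * u - 1) * (m + u) * m * t
   - 2 * (m ^ 2 * u ^ 2 + m ^ 2 - 2 * m * u + 2) * m * t ^ 2
   - 2 * Kmu m u * m ^ 2) / m.

Definition Px (m u : R) : R := (m ^ 2 + 1) * (m + u) ^ 2.
Definition Py (m u : R) : R := u ^ 2 * (m ^ 2 + 1) ^ 2 * (m + u) * (m * u - 1).

Definition Fx (m u a b c : R) : R :=
  xfun m u (rparam (alpha a b c)) (wtri m u a b c).
Definition Fy (m u a b c : R) : R :=
  yfun m u (rparam (alpha a b c)) (wtri m u a b c).

Definition good_point (m u x y : R) : Prop :=
  IsRatR x /\ IsRatR y /\ onE m u x y /\ lineL m u x y <> 0 /\
  condA m u (tfun m u x y) /\ 0 < wfun m u x y.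

(* Main.v *)
Require Import Defs.
From Stdlib Require Import Reals QArith Qreals Lra Lia Psatz.
Open Scope R_scope.

Lemma rat_Q (q : Q) : IsRatR (Q2R q).
Proof. exists q; reflexivity. Qed.

Lemma rat_IZR z : IsRatR (IZR z).
Proof. exists (inject_Z z). unfold Q2R; simpl. field. Qed.

Lemma rat_add x y : IsRatR x -> IsRatR y -> IsRatR (x + y).
Proof. intros [p ->] [q ->]. exists (p + q)%Q. now rewrite Q2R_plus. Qed.
Lemma rat_mul x y : IsRatR x -> IsRatR y -> IsRatR (x * y).
Proof. intros [p ->] [q ->]. exists (p * q)%Q. now rewrite Q2R_mult. Qed.
Lemma rat_opp x : IsRatR x -> IsRatR (- x).
Proof. intros [p ->]. exists (- p)%Q. now rewrite Q2R_opp. Qed.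
Lemma rat_sub x y : IsRatR x -> IsRatR y -> IsRatR (x - y).
Proof. intros [p ->] [q ->]. exists (p - q)%Q. now rewrite Q2R_minus. Qed.
Lemma rat_inv x : IsRatR x -> IsRatR (/ x).
Proof.
  intros [p ->]. exists (/ p)%Q. rewrite RMicromega.Q2R_inv_ext.
  destruct (Qeq_bool p 0) eqn:E.
  - apply Qeq_bool_eq in E. apply Qeq_eqR in E. rewrite E, RMicromega.Q2R_0.
    now rewrite Rinv_0.
  - reflexivity.
Qed.
Lemma rat_div x y : IsRatR x -> IsRatR y -> IsRatR (x / y).
Proof. intros. unfold Rdiv. apply rat_mul; auto. now apply rat_inv. Qed.
Lemma rat_pow x n : IsRatR x -> IsRatR (x ^ n).
Proof. intros H. induction n; simpl. apply (rat_IZR 1). now apply rat_mul. Qed.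

Lemma Rdiv_le_0_compat a b : 0 <= a -> 0 < b -> 0 <= a / b.
Proof. intros. unfold Rdiv. apply Rmult_le_pos; auto. left; now apply Rinv_0_lt_compat. Qed.

Lemma rat_R1 : IsRatR R1.
Proof. exists 1%Q. unfold Q2R; simpl. field. Qed.
Lemma rat_R0 : IsRatR R0.
Proof. exists 0%Q. unfold Q2R; simpl. field. Qed.

Ltac rat := repeat first
  [ assumption | apply rat_R1 | apply rat_R0
  | apply rat_add | apply rat_mul | apply rat_sub | apply rat_opp
  | apply rat_div | apply rat_inv | apply rat_pow | apply rat_IZR ].

Lemma cosh_exp x : cosh x = (exp x ^ 2 + 1) / (2 * exp x).
Proof.
  unfold cosh. rewrite exp_Ropp. assert (exp x > 0) by apply exp_pos. field. lra.
Qed.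
Lemma sinh_exp x : sinh x = (exp x ^ 2 - 1) / (2 * exp x).
Proof.
  unfold sinh. rewrite exp_Ropp. assert (exp x > 0) by apply exp_pos. field. lra.
Qed.
Lemma cosh_plus x y : cosh (x + y) = cosh x * cosh y + sinh x * sinh y.
Proof.
  rewrite !cosh_exp, !sinh_exp, exp_plus.
  assert (exp x > 0) by apply exp_pos. assert (exp y > 0) by apply exp_pos.
  field. lra.
Qed.
Lemma cosh_minus x y : cosh (x - y) = cosh x * cosh y - sinh x * sinh y.
Proof.
  unfold Rminus. rewrite cosh_plus.
  rewrite (cosh_exp (- y)), (sinh_exp (-y)), (cosh_exp y), (sinh_exp y), exp_Ropp.
  assert (exp y > 0) by apply exp_pos. field. lra.
Qed.
Lemma exp_gt1 x : 0 < x -> 1 < exp x.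
Proof. intros. rewrite <- exp_0. now apply exp_increasing. Qed.
Lemma sinh_pos x : 0 < x -> 0 < sinh x.
Proof. intros. rewrite <- sinh_0. now apply sinh_lt. Qed.
Lemma cosh_gt1 x : 0 < x -> 1 < cosh x.
Proof.
  intros H. rewrite cosh_exp. pose proof (exp_gt1 x H).
  apply Rlt_0_minus.
  replace ((exp x ^ 2 + 1) / (2 * exp x) - 1) with ((exp x - 1)^2 / (2 * exp x)) by (field; lra).
  apply Rdiv_lt_0_compat; nra.
Qed.
Lemma cosh_lt x y : 0 <= x -> x < y -> cosh x < cosh y.
Proof.
  intros H0 H1. rewrite !cosh_exp.
  assert (1 <= exp x) by (destruct H0 as [H0|<-]; [left; now apply exp_gt1| rewrite exp_0; lra]).
  assert (exp x < exp y) by now apply exp_increasing.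
  apply Rlt_0_minus.
  replace ((exp y ^ 2 + 1) / (2 * exp y) - (exp x ^ 2 + 1) / (2 * exp x))
    with ((exp y - exp x) * (exp x * exp y - 1) / (2 * exp x * exp y)) by (field; lra).
  assert (1 < exp y) by lra.
  apply Rdiv_lt_0_compat.
  - apply Rmult_lt_0_compat; [lra|]. nra.
  - assert (0 < exp x * exp y) by nra. lra.
Qed.
Lemma cosh_even x : cosh (- x) = cosh x.
Proof. unfold cosh. rewrite Ropp_involutive. lra. Qed.
Lemma cosh_abs_lt x y : Rabs x < y -> cosh x < cosh y.
Proof.
  intros H. destruct (Rcase_abs x) as [Hx|Hx].
  - rewrite Rabs_left in H by lra. rewrite <- cosh_even. apply cosh_lt; lra.
  - rewrite Rabs_right in H by lra. apply cosh_lt; lra.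
Qed.
Lemma cosh_lt_inv x y : 0 <= y -> cosh x < cosh y -> x < y.
Proof.
  intros Hy H. destruct (Rlt_or_le x y) as [|Hxy]; auto.
  exfalso. destruct Hxy as [Hxy|<-]; [|lra].
  pose proof (cosh_lt y x Hy Hxy). lra.
Qed.
Lemma cosh_inj x y : 0 <= x -> 0 <= y -> cosh x = cosh y -> x = y.
Proof.
  intros Hx Hy H. destruct (Rtotal_order x y) as [h|[h|h]]; auto.
  - pose proof (cosh_lt x y Hx h); lra.
  - pose proof (cosh_lt y x Hy h); lra.
Qed.
Definition ch (X : R) := (X^2+1)/(2*X).
Definition sh (X : R) := (X^2-1)/(2*X).
Definition kk X Y Z := (ch Y * ch Z - ch X)/(sh Y * sh Z).
Lemma dual2 X Y Z : 1 < X -> 1 < Y -> 1 < Z ->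
  kk X Y Z + kk Y Z X * kk Z X Y = ch X * (1 - (kk X Y Z)^2) * sh Y * sh Z / (sh X)^2.
Proof. intros. unfold kk, ch, sh. field. repeat split; nra. Qed.
Lemma dual1 X Y Z : 1 < X -> 1 < Y -> 1 < Z ->
  ((kk X Y Z + kk Y Z X * kk Z X Y)/ch X)^2 = (1 - (kk Y Z X)^2) * (1 - (kk Z X Y)^2).
Proof. intros. unfold kk, ch, sh. field. repeat split; nra. Qed.
Definition cT t := (1 - t^2)/(1+t^2).
Definition sT t := 2*t/(1+t^2).
Lemma half x : cos x <> 0 -> cos (2*x) = cT (tan x) /\ sin (2*x) = sT (tan x).
Proof.
  intros H. pose proof (sin2_cos2 x) as E. unfold Rsqr in E.
  rewrite cos_2a, sin_2a. unfold cT, sT, tan.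
  assert (1 + (sin x / cos x)^2 = 1 / (cos x)^2) as E2.
  { replace 1 with (sin x * sin x + cos x * cos x) at 2 by exact E. field. auto. }
  split; rewrite E2; field; auto.
Qed.
Lemma half_angle th : 0 < th < PI ->
  0 < tan (th/2) /\ cos th = cT (tan (th/2)) /\ sin th = sT (tan (th/2)) /\ 0 < cos (th/2).
Proof.
  intros H. assert (0 < cos (th/2)) by (apply cos_gt_0; lra).
  assert (0 < sin (th/2)) by (apply sin_gt_0; lra).
  destruct (half (th/2)) as [h1 h2]; [lra|].
  replace (2 * (th/2)) with th in h1, h2 by field.
  repeat split; auto. unfold tan. apply Rdiv_lt_0_compat; auto.
Qed.

Lemma ch_cosh x : cosh x = ch (exp x).
Proof. apply cosh_exp. Qed.
Lemma sh_sinh x : sinh x = sh (exp x).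
Proof. apply sinh_exp. Qed.

Lemma htri_rot a b c : htri a b c -> htri b c a.
Proof. unfold htri; lra. Qed.

Lemma tri_k a b c : htri a b c -> -1 < kk (exp a) (exp b) (exp c) < 1.
Proof.
  intros (Ha&Hb&Hc&H1&H2&H3).
  pose proof (sinh_pos b Hb). pose proof (sinh_pos c Hc).
  assert (Hp : 0 < sh (exp b) * sh (exp c)) by (rewrite <- !sh_sinh; nra).
  assert (cosh a < cosh (b + c)) by (apply cosh_lt; lra).
  assert (cosh (b - c) < cosh a) by (apply cosh_abs_lt; unfold Rabs; destruct Rcase_abs; lra).
  rewrite cosh_plus in *. rewrite cosh_minus in *.
  rewrite !ch_cosh, !sh_sinh in *. unfold kk. split.
  - apply (Rmult_lt_reg_r (sh (exp b) * sh (exp c))); auto.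
    unfold Rdiv; rewrite Rmult_assoc, Rinv_l by lra. lra.
  - apply (Rmult_lt_reg_r (sh (exp b) * sh (exp c))); auto.
    unfold Rdiv; rewrite Rmult_assoc, Rinv_l by lra. lra.
Qed.

Lemma hangle_k a b c : hangle a b c = acos (kk (exp a) (exp b) (exp c)).
Proof. unfold hangle, kk. now rewrite !ch_cosh, !sh_sinh. Qed.

Lemma tri_angle a b c : htri a b c ->
  cos (hangle a b c) = kk (exp a) (exp b) (exp c) /\
  sin (hangle a b c) = sqrt (1 - (kk (exp a) (exp b) (exp c))^2) /\
  0 < sin (hangle a b c) /\ 0 < hangle a b c < PI.
Proof.
  intros H. pose proof (tri_k a b c H) as Hk. rewrite hangle_k.
  set (k := kk _ _ _) in *.
  rewrite cos_acos by lra. rewrite sin_acos by lra.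
  unfold Rsqr. replace (k^2) with (k*k) by ring.
  repeat split; try apply acos_bound_lt; auto.
  apply sqrt_lt_R0. nra.
Qed.

Lemma tri_dual a b c : htri a b c ->
  cosh a * sin (hangle b c a) * sin (hangle c a b) =
  cos (hangle a b c) + cos (hangle b c a) * cos (hangle c a b).
Proof.
  intros H. pose proof (htri_rot _ _ _ H) as H'. pose proof (htri_rot _ _ _ H') as H''.
  destruct (tri_angle _ _ _ H) as (c1 & s1 & _).
  destruct (tri_angle _ _ _ H') as (c2 & s2 & _).
  destruct (tri_angle _ _ _ H'') as (c3 & s3 & _).
  pose proof (tri_k _ _ _ H) as k1. pose proof (tri_k _ _ _ H') as k2.
  pose proof (tri_k _ _ _ H'') as k3.
  destruct H as (Ha&Hb&Hc&_).
  rewrite c1, c2, c3, s2, s3, ch_cosh.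
  assert (1 < exp a) by now apply exp_gt1.
  assert (1 < exp b) by now apply exp_gt1.
  assert (1 < exp c) by now apply exp_gt1.
  rewrite Rmult_assoc, <- sqrt_mult by nra.
  rewrite <- dual1 by auto.
  assert (0 < ch (exp a)) by (unfold ch; apply Rdiv_lt_0_compat; nra).
  assert (0 < sh (exp b)) by (unfold sh; apply Rdiv_lt_0_compat; nra).
  assert (0 < sh (exp c)) by (unfold sh; apply Rdiv_lt_0_compat; nra).
  assert (0 < sh (exp a)) by (unfold sh; apply Rdiv_lt_0_compat; nra).
  rewrite sqrt_pow2.
  - field. lra.
  - rewrite dual2 by auto. apply Rdiv_le_0_compat; [|nra].
    apply Rdiv_le_0_compat; [|nra].
    apply Rmult_le_pos; [|lra]. apply Rmult_le_pos; [|lra].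
    apply Rmult_le_pos; nra.
Qed.
Definition chA x y z := (cT x + cT y * cT z)/(sT y * sT z).
Definition sfun m u t := (1 - t*u - m*(t+u)) / (m*(1-t*u) + t + u).

Lemma E1id x y z : cT x + cT y * cT z - sT y * sT z =
  2*(1-x*y-y*z-z*x)*(1-y*z+x*y+x*z)/((1+x^2)*(1+y^2)*(1+z^2)).
Proof. unfold cT, sT. field. repeat split; nra. Qed.

Lemma sines x y z : x <> 0 -> y <> 0 -> z <> 0 ->
  ((chA y z x)^2 - 1) * (sT x)^2 = ((chA x y z)^2 - 1) * (sT y)^2.
Proof. intros. unfold chA, cT, sT. field. repeat split; nra. Qed.

Definition Gf x y z := ((chA x y z)^2 - 1) * sT y * sT z / (sT x)^2.
Lemma inv1 x y z : x <> 0 -> y <> 0 -> z <> 0 ->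
  ((chA y z x)^2 - 1) * ((chA z x y)^2 - 1) = (Gf x y z)^2.
Proof. intros. unfold Gf, chA, cT, sT. field. repeat split; nra. Qed.
Lemma inv2 x y z : x <> 0 -> y <> 0 -> z <> 0 ->
  chA y z x * chA z x y - chA x y z = cT x * Gf x y z.
Proof. intros. unfold Gf, chA, cT, sT. field. repeat split; nra. Qed.

Lemma Qid m u t : m*(1-t*u) + t + u <> 0 ->
  ((m^2+1)*(u^2+1)*(t^2+1))^2 *
   ((cT t + cT u * cT (sfun m u t))^2 - (sT u * sT (sfun m u t))^2) = Qmu m u t.
Proof. intros. unfold sfun, cT, sT, Qmu. field. repeat split; auto; nra.
Qed.

Lemma tan_sin x t : 0 < cos x -> tan x = t -> sin x = t * cos x.
Proof. unfold tan. intros H <-. field. lra. Qed.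

Lemma sum3 x y z t u s : 0 < cos x -> 0 < cos y -> 0 < cos z ->
  tan x = t -> tan y = u -> tan z = s ->
  cos (x+y+z) = cos x * cos y * cos z * (1 - t*u - u*s - s*t) /\
  sin (x+y+z) = cos x * cos y * cos z * (t + u + s - t*u*s).
Proof.
  intros hx hy hz tx ty tz.
  apply tan_sin in tx, ty, tz; auto.
  repeat rewrite ?cos_plus, ?sin_plus. rewrite tx, ty, tz. split; ring.
Qed.

Lemma area_rel x y z t u s m : 0 < cos x -> 0 < cos y -> 0 < cos z ->
  tan x = t -> tan y = u -> tan z = s -> 0 < m ->
  tan ((PI - 2*x - 2*y - 2*z)/2) = m ->
  m * (t + u + s - t*u*s) = 1 - t*u - u*s - s*t.
Proof.
  intros hx hy hz tx ty tz hm H.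
  destruct (sum3 x y z t u s hx hy hz tx ty tz) as [c3 s3].
  replace ((PI - 2*x - 2*y - 2*z)/2) with (PI/2 - (x+y+z)) in H by field.
  unfold tan in H. rewrite sin_shift, cos_shift in H.
  assert (0 < cos x * cos y * cos z) by (apply Rmult_lt_0_compat; [nra|lra]).
  destruct (Req_dec (sin (x+y+z)) 0) as [h0|h0].
  - rewrite h0, Rdiv_0_r in H. lra.
  - assert (m * sin (x+y+z) = cos (x+y+z)) as H2 by (rewrite <- H; field; auto).
    rewrite c3, s3 in H2.
    apply (Rmult_eq_reg_l (cos x * cos y * cos z)); [|lra]. rewrite <- H2. ring.
Qed.

Lemma div_pos_inv a b : 0 < a / b -> 0 < b -> 0 < a.
Proof. intros H Hb. replace a with (a / b * b) by (field; lra). nra. Qed.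

Lemma forward m u a b c : 0 < m -> 0 < u -> heron_mu m u a b c ->
  let t := rparam (alpha a b c) in
  let s := sfun m u t in
  0 < t /\ 0 < s /\ 0 < m*(1-t*u)+t+u /\ t*(m+u) < 1 - m*u /\
  cos (alpha a b c) = cT t /\ sin (alpha a b c) = sT t /\
  cos (beta a b c) = cT u /\ sin (beta a b c) = sT u /\
  cos (gamma a b c) = cT s /\ sin (gamma a b c) = sT s /\
  cosh a = chA t u s /\ cosh b = chA u s t /\ cosh c = chA s t u.
Proof.
  intros Hm Hu (Hh & Hm' & Hu'). destruct Hh as (Ht & _).
  unfold harea, rparam, alpha, beta, gamma in *.
  pose proof (htri_rot _ _ _ Ht) as Ht'. pose proof (htri_rot _ _ _ Ht') as Ht''.
  destruct (tri_angle _ _ _ Ht) as (_ & _ & sa & ba).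
  destruct (tri_angle _ _ _ Ht') as (_ & _ & sb & bb).
  destruct (tri_angle _ _ _ Ht'') as (_ & _ & sc & bc).
  destruct (half_angle _ ba) as (tp & ca' & sa' & cxp).
  destruct (half_angle _ bb) as (up & cb' & sb' & cyp).
  destruct (half_angle _ bc) as (sp & cc' & sc' & czp).
  rewrite Hu' in cb', sb'.
  set (t := tan (hangle a b c / 2)) in *.
  set (s0 := tan (hangle c a b / 2)) in *.
  assert (R1 : m * (t + u + s0 - t*u*s0) = 1 - t*u - u*s0 - s0*t).
  { apply (area_rel (hangle a b c / 2) (hangle b c a / 2) (hangle c a b / 2)); auto.
    rewrite <- Hm'. f_equal. field. }
  pose proof (tri_dual _ _ _ Ht) as d1.
  pose proof (tri_dual _ _ _ Ht') as d2.
  pose proof (tri_dual _ _ _ Ht'') as d3.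
  destruct Ht as (Ha&Hb&Hc&_).
  pose proof (cosh_gt1 a Ha). pose proof (cosh_gt1 b Hb). pose proof (cosh_gt1 c Hc).
  assert (P1 : cT t + cT u * cT s0 - sT u * sT s0 > 0).
  { rewrite <- ca', <- cb', <- cc', <- sb', <- sc', <- d1.
    assert (0 < sin (hangle b c a) * sin (hangle c a b)) by (apply Rmult_lt_0_compat; auto).
    nra. }
  assert (P3 : cT s0 + cT t * cT u - sT t * sT u > 0).
  { rewrite <- ca', <- cb', <- cc', <- sb', <- sa', <- d3.
    assert (0 < sin (hangle a b c) * sin (hangle b c a)) by (apply Rmult_lt_0_compat; auto).
    nra. }
  rewrite E1id in P1, P3.
  assert (Q1 : 0 < (1 - t*u - u*s0 - s0*t) * (1 - u*s0 + t*u + t*s0)).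
  { assert (0 < (1+t^2)*(1+u^2)*(1+s0^2)) by (repeat apply Rmult_lt_0_compat; nra).
    pose proof (div_pos_inv _ _ P1 H2). lra. }
  assert (Q3 : 0 < (1 - s0*t - t*u - u*s0) * (1 - t*u + s0*t + s0*u)).
  { assert (0 < (1+s0^2)*(1+t^2)*(1+u^2)) by (repeat apply Rmult_lt_0_compat; nra).
    pose proof (div_pos_inv _ _ P3 H2). lra. }
  assert (HE : 0 < 1 - t*u - u*s0 - s0*t).
  { destruct (Rlt_or_le 0 (1 - t*u - u*s0 - s0*t)) as [h|h]; auto.
    exfalso. assert (0 < t * s0) by nra. nra. }
  assert (Htu : t * u < 1) by nra.
  assert (HD : 0 < m*(1-t*u)+t+u) by nra.
  assert (Hs : s0 = sfun m u t).
  { unfold sfun. apply (Rmult_eq_reg_r (m*(1-t*u)+t+u)); [|lra].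
    field_simplify; [|lra]. nra. }
  rewrite <- Hs.
  assert (0 < sT u * sT s0) by (rewrite <- sb', <- sc'; apply Rmult_lt_0_compat; auto).
  assert (0 < sT s0 * sT t) by (rewrite <- sc', <- sa'; apply Rmult_lt_0_compat; auto).
  assert (0 < sT t * sT u) by (rewrite <- sa', <- sb'; apply Rmult_lt_0_compat; auto).
  repeat split; auto.
  - nra.
  - unfold chA. rewrite <- ca', <- cb', <- cc', <- sb', <- sc', <- d1. field.
    rewrite sb', sc'. lra.
  - unfold chA. rewrite <- ca', <- cb', <- cc', <- sa', <- sc', <- d2. field.
    rewrite sa', sc'. lra.
  - unfold chA. rewrite <- ca', <- cb', <- cc', <- sa', <- sb', <- d3. field.
    rewrite sa', sb'. lra.
Qed.

Lemma sinh2 x : sinh x ^ 2 = cosh x ^ 2 - 1.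
Proof. rewrite cosh_exp, sinh_exp. assert (exp x > 0) by apply exp_pos. field. lra. Qed.

Lemma w_formula m u a b c : 0 < m -> 0 < u -> heron_mu m u a b c ->
  0 < wtri m u a b c /\ Qmu m u (rparam (alpha a b c)) = (wtri m u a b c)^2.
Proof.
  intros Hm Hu H.
  destruct (forward m u a b c Hm Hu H) as (tp & sp & Dp & cA & ca & sa & cb & sb & cc & sc & cha & chb & chc).
  destruct H as ((Ht & _) & _).
  set (t := rparam (alpha a b c)) in *. set (s := sfun m u t) in *.
  assert (0 < sinh a) by (apply sinh_pos; unfold htri in Ht; lra).
  assert (0 < sT u) by (unfold sT; apply Rdiv_lt_0_compat; nra).
  assert (0 < sT s) by (unfold sT; apply Rdiv_lt_0_compat; nra).
  unfold wtri. fold t. rewrite sb, sc. split.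
  - assert (0 < m^2+1) by nra. assert (0 < u^2+1) by nra. assert (0 < t^2+1) by nra.
    apply Rmult_lt_0_compat; [|assumption]. apply Rmult_lt_0_compat; [|assumption].
    apply Rmult_lt_0_compat; [|assumption]. repeat apply Rmult_lt_0_compat; assumption.
  - rewrite <- Qid by lra.
    replace (((m ^ 2 + 1) * (u ^ 2 + 1) * (t ^ 2 + 1) * sinh a * sT u * sT s) ^ 2)
      with (((m ^ 2 + 1) * (u ^ 2 + 1) * (t ^ 2 + 1))^2 * (sinh a ^ 2 * (sT u * sT s)^2)) by ring.
    f_equal. rewrite sinh2, cha. unfold chA. fold s. field. nra.
Qed.

Lemma part1a m u a b c : IsRatR m -> IsRatR u -> 0 < m -> 0 < u -> heron_mu m u a b c ->
  IsRatR (rparam (alpha a b c)) /\ condA m u (rparam (alpha a b c)) /\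
  IsRatR (wtri m u a b c) /\ 0 < wtri m u a b c /\
  Qmu m u (rparam (alpha a b c)) = (wtri m u a b c) ^ 2.
Proof.
  intros Hmq Huq Hm Hu H.
  destruct (w_formula m u a b c Hm Hu H) as [wp wq].
  destruct (forward m u a b c Hm Hu H) as (tp & sp & Dp & cA & ca & sa & cb & sb & cc & sc & cha & chb & chc).
  destruct H as ((Ht & la & lb & lc & [aa1 aa2] & [ab1 ab2] & [ag1 ag2] & _) & _).
  set (t := rparam (alpha a b c)) in *.
  assert (Et : t = sin (alpha a b c) / (1 + cos (alpha a b c))).
  { rewrite sa, ca. unfold sT, cT. field. split; nra. }
  assert (IsRatR t) by (rewrite Et; rat).
  split; [auto|]. split; [|split; [|split; auto]].
  - unfold condA. split; auto. apply (Rmult_lt_reg_r (m+u)); [lra|].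
    replace ((1-m*u)/(m+u)*(m+u)) with (1-m*u) by (field; lra). lra.
  - unfold wtri. fold t. rewrite sh_sinh. unfold sh. rat.
Qed.

Definition acosh C := ln (C + sqrt (C^2 - 1)).

Lemma acosh_spec C : 1 < C ->
  0 < acosh C /\ cosh (acosh C) = C /\ sinh (acosh C) = sqrt (C^2-1) /\
  exp (acosh C) = C + sqrt (C^2 - 1).
Proof.
  intros H. assert (0 <= C^2-1) by nra.
  pose proof (sqrt_pos (C^2-1)). pose proof (pow2_sqrt _ H0) as E.
  assert (ex : exp (acosh C) = C + sqrt (C^2-1)) by (unfold acosh; apply exp_ln; lra).
  repeat split; auto.
  - unfold acosh. rewrite <- ln_1. apply ln_increasing; lra.
  - rewrite cosh_exp, ex. set (S := sqrt (C^2-1)) in *.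
    replace ((C+S)^2+1) with (2*C*(C+S))
      by nra.
    field. lra.
  - rewrite sinh_exp, ex. set (S := sqrt (C^2-1)) in *.
    replace ((C+S)^2-1) with (2*S*(C+S))
      by nra.
    field. lra.
Qed.

Lemma cT_atan x : cos (2 * atan x) = cT x /\ sin (2 * atan x) = sT x.
Proof.
  destruct (half (atan x)) as [h1 h2].
  - rewrite cos_atan. unfold Rdiv. rewrite Rmult_1_l.
    apply Rinv_neq_0_compat. apply Rgt_not_eq, sqrt_lt_R0. unfold Rsqr; nra.
  - rewrite tan_atan in h1, h2. auto.
Qed.

Lemma atan_pos x : 0 < x -> 0 < atan x < PI/2.
Proof.
  intros. pose proof (atan_increasing 0 x H). rewrite atan_0 in H0.
  pose proof (atan_bound x). lra.
Qed.

Lemma cT_bound x : -1 < cT x.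
Proof. unfold cT. apply Rlt_0_minus. replace ((1 - x^2)/(1+x^2) - -1) with (2/(1+x^2)) by (field; nra).
  apply Rdiv_lt_0_compat; nra. Qed.

Lemma ang_gen x y z : 0 < x -> 0 < y -> 0 < z ->
  1 < chA x y z -> 1 < chA y z x -> 1 < chA z x y ->
  hangle (acosh (chA x y z)) (acosh (chA y z x)) (acosh (chA z x y)) = 2 * atan x /\
  cosh (acosh (chA y z x)) * cosh (acosh (chA z x y)) - cosh (acosh (chA x y z)) =
   cT x * (sinh (acosh (chA y z x)) * sinh (acosh (chA z x y))) /\
  0 < sinh (acosh (chA y z x)) * sinh (acosh (chA z x y)).
Proof.
  intros hx hy hz h1 h2 h3.
  destruct (acosh_spec _ h1) as (_ & c1 & s1 & _).
  destruct (acosh_spec _ h2) as (_ & c2 & s2 & _).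
  destruct (acosh_spec _ h3) as (_ & c3 & s3 & _).
  assert (Hss : sinh (acosh (chA y z x)) * sinh (acosh (chA z x y)) = Gf x y z).
  { rewrite s2, s3, <- sqrt_mult by nra. rewrite inv1 by lra.
    apply sqrt_pow2. unfold Gf. apply Rdiv_le_0_compat.
    - assert (0 < sT y) by (unfold sT; apply Rdiv_lt_0_compat; nra).
      assert (0 < sT z) by (unfold sT; apply Rdiv_lt_0_compat; nra).
      assert (0 < chA x y z ^ 2 - 1) by nra.
      left. apply Rmult_lt_0_compat; [apply Rmult_lt_0_compat|]; auto.
    - assert (0 < sT x) by (unfold sT; apply Rdiv_lt_0_compat; nra). nra. }
  assert (Gp : 0 < Gf x y z).
  { unfold Gf.
    assert (0 < sT y) by (unfold sT; apply Rdiv_lt_0_compat; nra).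
    assert (0 < sT z) by (unfold sT; apply Rdiv_lt_0_compat; nra).
    assert (0 < sT x) by (unfold sT; apply Rdiv_lt_0_compat; nra).
    assert (0 < chA x y z ^ 2 - 1) by nra.
    apply Rdiv_lt_0_compat; [|nra]. apply Rmult_lt_0_compat; [apply Rmult_lt_0_compat|]; auto. }
  assert (Hc : cosh (acosh (chA y z x)) * cosh (acosh (chA z x y)) - cosh (acosh (chA x y z)) =
   cT x * (sinh (acosh (chA y z x)) * sinh (acosh (chA z x y)))).
  { rewrite c1, c2, c3, Hss. apply inv2; lra. }
  assert (Pp : 0 < sinh (acosh (chA y z x)) * sinh (acosh (chA z x y))) by (rewrite Hss; lra).
  split; [|split; auto].
  unfold hangle. replace ((cosh (acosh (chA y z x)) * cosh (acosh (chA z x y)) -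
     cosh (acosh (chA x y z))) / (sinh (acosh (chA y z x)) * sinh (acosh (chA z x y))))
   with (cT x) by (rewrite Hc; field; split; intro h0; rewrite h0 in Pp; lra).
  destruct (cT_atan x) as [e _]. rewrite <- e. apply acos_cos.
  pose proof (atan_pos x hx). lra.
Qed.

Lemma tri_ineq a b c k : 0 < a -> 0 < b -> 0 < c -> -1 < k ->
  cosh b * cosh c - cosh a = k * (sinh b * sinh c) -> 0 < sinh b * sinh c -> a < b + c.
Proof.
  intros ha hb hc hk E P. apply cosh_lt_inv; [lra|]. rewrite cosh_plus. nra.
Qed.

Lemma sT_pos x : 0 < x -> 0 < sT x.
Proof. intros. unfold sT. apply Rdiv_lt_0_compat; nra. Qed.

Lemma chA_gt1 x y z : 0 < x -> 0 < y -> 0 < z -> 0 < 1-x*y-y*z-z*x -> 0 < 1 - y*z + x*y + x*z ->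
  1 < chA x y z.
Proof.
  intros hx hy hz h1 h2. pose proof (sT_pos y hy). pose proof (sT_pos z hz).
  assert (0 < cT x + cT y * cT z - sT y * sT z).
  { rewrite E1id. apply Rdiv_lt_0_compat; [nra|]. repeat apply Rmult_lt_0_compat; nra. }
  unfold chA. apply Rlt_0_minus.
  replace ((cT x + cT y * cT z) / (sT y * sT z) - 1) with
    ((cT x + cT y * cT z - sT y * sT z) / (sT y * sT z)) by (field; lra).
  apply Rdiv_lt_0_compat; nra.
Qed.

Lemma idE m u t : m*(1-t*u)+t+u <> 0 ->
  (1 - t*u - u*sfun m u t - sfun m u t*t) * (m*(1-t*u)+t+u) = m*(1+t^2)*(1+u^2).
Proof. intros. unfold sfun. field. auto. Qed.
Lemma idFa m u t : m*(1-t*u)+t+u <> 0 ->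
  (1 - u*sfun m u t + t*u + t*sfun m u t) * (m*(1-t*u)+t+u) = (1+u^2)*(m*(1-t^2)+2*t).
Proof. intros. unfold sfun. field. auto. Qed.
Lemma idFb m u t : m*(1-t*u)+t+u <> 0 ->
  (1 - sfun m u t*t + u*sfun m u t + u*t) * (m*(1-t*u)+t+u) = (1+t^2)*(m*(1-u^2)+2*u).
Proof. intros. unfold sfun. field. auto. Qed.
Lemma idR1 m u t : m*(1-t*u)+t+u <> 0 ->
  m * (t + u + sfun m u t - t*u*sfun m u t) = 1 - t*u - u*sfun m u t - sfun m u t*t.
Proof. intros. unfold sfun. field. auto. Qed.

Lemma sqrt_id x y : 0 <= y -> x = y^2 -> sqrt x = y.
Proof. intros h ->. now apply sqrt_pow2. Qed.

Lemma part1c m u t w : IsRatR m -> IsRatR u -> 0 < m -> 0 < u -> m*u < 1 ->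
  IsRatR t -> IsRatR w -> condA m u t -> 0 < w -> Qmu m u t = w^2 ->
  exists a b c, heron_mu m u a b c /\ rparam (alpha a b c) = t.
Proof.
  intros Hmq Huq Hm Hu Hmu Htq Hwq [Ht Ht2] Hw HQ.
  assert (HtA : t * (m+u) < 1 - m*u).
  { apply (Rmult_lt_compat_r (m+u)) in Ht2; [|lra].
    replace ((1-m*u)/(m+u)*(m+u)) with (1-m*u) in Ht2 by (field; lra). lra. }
  assert (Htu : t*u < 1) by nra.
  assert (HD : 0 < m*(1-t*u)+t+u) by nra.
  set (s := sfun m u t).
  assert (Hs : 0 < s) by (unfold s, sfun; apply Rdiv_lt_0_compat; nra).
  assert (Hsq : IsRatR s) by (unfold s, sfun; rat).
  assert (HE : 0 < 1 - t*u - u*s - s*t).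
  { pose proof (idE m u t ltac:(lra)). fold s in H.
    assert (0 < m*(1+t^2)*(1+u^2)) by (repeat apply Rmult_lt_0_compat; nra).
    nra. }
  assert (HFa : 0 < 1 - u*s + t*u + t*s).
  { pose proof (idFa m u t ltac:(lra)). fold s in H.
    assert (m*t < 1) by nra. assert (0 < m*(1-t^2)+2*t) by nra.
    assert (0 < (1+u^2)*(m*(1-t^2)+2*t)) by (apply Rmult_lt_0_compat; nra).
    nra. }
  assert (HFb : 0 < 1 - s*t + u*s + u*t).
  { pose proof (idFb m u t ltac:(lra)). fold s in H.
    assert (m*u*u < u) by nra. assert (0 < m*(1-u^2)+2*u) by nra.
    assert (0 < (1+t^2)*(m*(1-u^2)+2*u)) by (apply Rmult_lt_0_compat; nra).
    nra. }
  assert (h1 : 1 < chA t u s) by (apply chA_gt1; try nra).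
  assert (h2 : 1 < chA u s t) by (apply chA_gt1; try nra).
  assert (h3 : 1 < chA s t u) by (apply chA_gt1; try nra).
  set (a := acosh (chA t u s)). set (b := acosh (chA u s t)). set (c := acosh (chA s t u)).
  destruct (acosh_spec _ h1) as (pa & ca & sa & ea).
  destruct (acosh_spec _ h2) as (pb & cb & sb & eb).
  destruct (acosh_spec _ h3) as (pc & cc & sc & ec).
  fold a in pa, ca, sa, ea. fold b in pb, cb, sb, eb. fold c in pc, cc, sc, ec.
  destruct (ang_gen t u s Ht Hu Hs h1 h2 h3) as (A1 & A2 & A3).
  destruct (ang_gen u s t Hu Hs Ht h2 h3 h1) as (B1 & B2 & B3).
  destruct (ang_gen s t u Hs Ht Hu h3 h1 h2) as (C1 & C2 & C3).
  fold a b c in A1, A2, A3, B1, B2, B3, C1, C2, C3.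
  assert (Htri : htri a b c).
  { unfold htri. repeat split; auto.
    - apply (tri_ineq a b c (cT t)); auto. apply cT_bound.
    - apply (tri_ineq b c a (cT u)); auto. apply cT_bound.
    - apply (tri_ineq c a b (cT s)); auto. apply cT_bound. }
  pose proof (sT_pos t Ht). pose proof (sT_pos u Hu). pose proof (sT_pos s Hs).
  set (P := (m^2+1)*(u^2+1)*(t^2+1)).
  assert (HP : 0 < P) by (unfold P; repeat apply Rmult_lt_0_compat; nra).
  assert (SA : sqrt (chA t u s ^ 2 - 1) = w / (P * sT u * sT s)).
  { apply sqrt_id. left. apply Rdiv_lt_0_compat; auto.
    apply Rmult_lt_0_compat; [apply Rmult_lt_0_compat|]; auto.
    transitivity (w^2/(P*sT u*sT s)^2); [| field; repeat split; lra].
    rewrite <- HQ. rewrite <- (Qid m u t) by lra. fold s P. unfold chA.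
    field. repeat split; lra. }
  assert (SB : sqrt (chA u s t ^ 2 - 1) = sqrt (chA t u s ^ 2 - 1) * sT u / sT t).
  { apply sqrt_id.
    - apply Rdiv_le_0_compat; auto. apply Rmult_le_pos; [apply sqrt_pos|lra].
    - apply (Rmult_eq_reg_r (sT t ^ 2)); [|nra].
      rewrite sines by lra.
      replace ((sqrt (chA t u s ^ 2 - 1) * sT u / sT t) ^ 2 * sT t ^ 2) with
        ((sqrt (chA t u s ^ 2 - 1))^2 * sT u ^ 2) by (field; lra).
      rewrite pow2_sqrt by nra. reflexivity. }
  assert (SC : sqrt (chA s t u ^ 2 - 1) = sqrt (chA u s t ^ 2 - 1) * sT s / sT u).
  { apply sqrt_id.
    - apply Rdiv_le_0_compat; auto. apply Rmult_le_pos; [apply sqrt_pos|lra].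
    - apply (Rmult_eq_reg_r (sT u ^ 2)); [|nra].
      rewrite sines by lra.
      replace ((sqrt (chA u s t ^ 2 - 1) * sT s / sT u) ^ 2 * sT u ^ 2) with
        ((sqrt (chA u s t ^ 2 - 1))^2 * sT s ^ 2) by (field; lra).
      rewrite pow2_sqrt by nra. reflexivity. }
  assert (rA : IsRatR (sqrt (chA t u s ^ 2 - 1))) by (rewrite SA; unfold P; rat).
  assert (rB : IsRatR (sqrt (chA u s t ^ 2 - 1))) by (rewrite SB; rat).
  assert (rC : IsRatR (sqrt (chA s t u ^ 2 - 1))) by (rewrite SC; rat).
  destruct (cT_atan t) as [cat sat]. destruct (cT_atan u) as [cau sau].
  destruct (cT_atan s) as [cas sas].
  destruct (atan_pos t Ht) as [at1 at2]. destruct (atan_pos u Hu) as [au1 au2].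
  destruct (atan_pos s Hs) as [as1 as2].
  assert (cx : 0 < cos (atan t)) by (apply cos_gt_0; lra).
  assert (cy : 0 < cos (atan u)) by (apply cos_gt_0; lra).
  assert (cz : 0 < cos (atan s)) by (apply cos_gt_0; lra).
  destruct (sum3 (atan t) (atan u) (atan s) t u s cx cy cz (tan_atan t) (tan_atan u) (tan_atan s))
    as [cs ss].
  pose proof (idR1 m u t ltac:(lra)) as R1. fold s in R1.
  set (sg := atan t + atan u + atan s) in *.
  assert (Hsg : 0 < sin sg).
  { rewrite ss. assert (0 < t + u + s - t*u*s) by nra.
    repeat apply Rmult_lt_0_compat; auto. }
  assert (Har : harea a b c = 2 * (PI/2 - sg)).
  { unfold harea, alpha, beta, gamma. rewrite A1, B1, C1. unfold sg. field. }
  assert (Htan : tan (PI/2 - sg) = m).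
  { unfold tan. rewrite sin_shift, cos_shift, cs, ss.
    assert (Hq: 0 < t+u+s-t*u*s) by nra.
    rewrite <- R1. field. repeat split; lra. }
  destruct (half (PI/2 - sg)) as [hc hs]; [rewrite cos_shift; lra|].
  rewrite Htan in hc, hs. rewrite <- Har in hc, hs.
  exists a, b, c. split; [split; [|split]|].
  - unfold heron. split; [exact Htri|]. unfold rat_ang. repeat split.
    + unfold rat_len. rewrite ea. rat; try (unfold chA, cT, sT; rat).
    + unfold rat_len. rewrite eb. rat; try (unfold chA, cT, sT; rat).
    + unfold rat_len. rewrite ec. rat; try (unfold chA, cT, sT; rat).
    + unfold alpha. rewrite A1, cat. rat; try (unfold cT; rat).
    + unfold alpha. rewrite A1, sat. rat; try (unfold sT; rat).
    + unfold beta. rewrite B1, cau. rat; try (unfold cT; rat).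
    + unfold beta. rewrite B1, sau. rat; try (unfold sT; rat).
    + unfold gamma. rewrite C1, cas. rat; try (unfold cT; rat).
    + unfold gamma. rewrite C1, sas. rat; try (unfold sT; rat).
    + rewrite hc. rat; try (unfold cT; rat).
    + rewrite hs. rat; try (unfold sT; rat).
  - unfold rparam. rewrite Har. replace (2 * (PI/2 - sg) / 2) with (PI/2 - sg) by field. auto.
  - unfold rparam, beta. rewrite B1. replace (2 * atan u / 2) with (atan u) by field.
    apply tan_atan.
  - unfold rparam, alpha. rewrite A1. replace (2 * atan t / 2) with (atan t) by field.
    apply tan_atan.
Qed.

Definition Gpol (m u t w : R) : R := (16*m^2*u^4*t^2 - 8*m^3*u^3*w + 16*m^3*u^3*t^2 - 32*m^3*u^4*t - 16*m^3*u^5*t^2 - 12*m^4*u^2*w + 4*m^4*u^2*t^2 - 80*m^4*u^3*t - 32*m^4*u^4 + 12*m^4*u^4*w + 56*m^4*u^4*t^2 + 80*m^4*u^5*t + 4*m^4*u^6*t^2 - 6*m^5*u*w - 72*m^5*u^2*t - 64*m^5*u^3 + 12*m^5*u^3*w + 96*m^5*u^3*t^2 + 176*m^5*u^4*t + 64*m^5*u^5 - 6*m^5*u^5*w - 96*m^5*u^5*t^2 - 72*m^5*u^6*t - m^6*w - 28*m^6*u*t - 48*m^6*u^2 + 3*m^6*u^2*w + 56*m^6*u^2*t^2 + 132*m^6*u^3*t + 96*m^6*u^4 - 3*m^6*u^4*w - 96*m^6*u^4*t^2 - 132*m^6*u^5*t - 48*m^6*u^6 + m^6*u^6*w + 56*m^6*u^6*t^2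 + 28*m^6*u^7*t - 4*m^7*t - 16*m^7*u + 16*m^7*u*t^2 + 40*m^7*u^2*t + 48*m^7*u^3 - 32*m^7*u^3*t^2 - 72*m^7*u^4*t - 48*m^7*u^5 + 32*m^7*u^5*t^2 + 40*m^7*u^6*t + 16*m^7*u^7 - 16*m^7*u^7*t^2 - 4*m^7*u^8*t - 2*m^8 + 2*m^8*t^2 + 4*m^8*u*t + 8*m^8*u^2 - 4*m^8*u^2*t^2 - 12*m^8*u^3*t - 12*m^8*u^4 + 4*m^8*u^4*t^2 + 12*m^8*u^5*t + 8*m^8*u^6 - 4*m^8*u^6*t^2 - 4*m^8*u^7*t - 2*m^8*u^8 + 2*m^8*u^8*t^2).
Definition Hpol (m u x y : R) : R := (- 256*m^4*u^4*x^3 + 768*m^4*u^6*x^2 - 768*m^4*u^8*x + 256*m^4*u^10 - 512*m^5*u^3*x^3 + 3072*m^5*u^5*x^2 + 512*m^5*u^5*x^3 - 4608*m^5*u^7*x - 1536*m^5*u^7*x^2 + 2048*m^5*u^9 + 1536*m^5*u^9*x - 512*m^5*u^11 - 384*m^6*u^2*x^3 + 4992*m^6*u^4*x^2 + 768*m^6*u^4*x^3 - 11904*m^6*u^6*x - 4608*m^6*u^6*x^2 - 384*m^6*u^6*x^3 + 7296*m^6*u^8 + 6912*m^6*u^8*x + 1152*m^6*u^8*x^2 - 3072*m^6*u^10 - 1152*m^6*u^10*x + 384*m^6*u^12 - 128*m^7*u*x^3 + 4224*m^7*u^3*x^2 + 384*m^7*u^3*x^3 - 17280*m^7*u^5*x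 - 4224*m^7*u^5*x^2 - 384*m^7*u^5*x^3 + 15232*m^7*u^7 + 10368*m^7*u^7*x + 1920*m^7*u^7*x^2 + 128*m^7*u^7*x^3 - 6528*m^7*u^9 - 2688*m^7*u^9*x - 384*m^7*u^9*x^2 + 1152*m^7*u^11 + 384*m^7*u^11*x - 128*m^7*u^13 - 16*m^8*x^3 + 1968*m^8*u^2*x^2 + 64*m^8*u^2*x^3 - 15408*m^8*u^4*x + 192*m^8*u^4*x^2 - 96*m^8*u^4*x^3 + 20624*m^8*u^6 + 960*m^8*u^6*x - 1632*m^8*u^6*x^2 + 64*m^8*u^6*x^3 - 2240*m^8*u^8 + 4320*m^8*u^8*x + 192*m^8*u^8*x^2 - 16*m^8*u^8*x^3 - 2592*m^8*u^10 - 576*m^8*u^10*x + 48*m^8*u^10*x^2 + 320*m^8*u^12 - 48*m^8*u^12*x + 16*m^8*u^14 + 480*m^9*u*x^2 - 8640*m^9*u^3*x + 2688*m^9*u^3*x^2 + 18912*m^9*u^5 - 16128*m^9*u^5*x - 5568*m^9*u^5*x^2 + 16512*m^9*u^7 + 21888*m^9*u^7*x + 2688*m^9*u^7*x^2 - 17856*m^9*u^9 - 6912*m^9*u^9*x - 288*m^9*u^9*x^2 + 4224*m^9*u^11 + 576*m^9*u^11*x - 288*m^9*u^13 + 48*m^10*x^2 - 2976*m^10*u^2*x + 1776*m^10*u^2*x^2 + 11888*m^10*u^4 - 22752*m^10*u^4*x - 4512*m^10*u^4*x^2 + 38640*m^10*u^6 + 30144*m^10*u^6*x + 3552*m^10*u^6*x^2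 - 35616*m^10*u^8 - 12480*m^10*u^8*x - 912*m^10*u^8*x^2 + 9696*m^10*u^10 + 2016*m^10*u^10*x + 48*m^10*u^10*x^2 - 1104*m^10*u^12 - 96*m^10*u^12*x + 48*m^10*u^14 - 576*m^11*u*x + 480*m^11*u*x^2 + 5056*m^11*u^3 - 15360*m^11*u^3*x - 1536*m^11*u^3*x^2 + 44576*m^11*u^5 + 17280*m^11*u^5*x + 1728*m^11*u^5*x^2 - 31872*m^11*u^7 - 4608*m^11*u^7*x - 768*m^11*u^7*x^2 + 2880*m^11*u^9 + 192*m^11*u^9*x + 96*m^11*u^9*x^2 + 960*m^11*u^11 - 96*m^11*u^13 - 48*m^12*x + 48*m^12*x^2 + 1392*m^12*u^2 - 5760*m^12*u^2*x - 192*m^12*u^2*x^2 + 31632*m^12*u^4 + 432*m^12*u^4*x + 288*m^12*u^4*x^2 - 3696*m^12*u^6 + 9984*m^12*u^6*x - 192*m^12*u^6*x^2 - 22176*m^12*u^8 - 6480*m^12*u^8*x + 48*m^12*u^8*x^2 + 10320*m^12*u^10 + 1152*m^12*u^10*x - 1392*m^12*u^12 - 48*m^12*u^12*x + 48*m^12*u^14 + 224*m^13*u - 1152*m^13*u*x + 14400*m^13*u^3 - 4800*m^13*u^3*x + 21216*m^13*u^5 + 13824*m^13*u^5*x - 42880*m^13*u^7 - 10368*m^13*u^7*x + 19872*m^13*u^9 + 2688*m^13*u^9*x - 3264*m^13*u^11 - 192*m^13*u^11*x + 160*m^13*u^13 + 16*m^14 - 96*m^14*x + 4112*m^14*u^2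 - 2592*m^14*u^2*x + 23664*m^14*u^4 + 7488*m^14*u^4*x - 36752*m^14*u^6 - 7104*m^14*u^6*x + 15344*m^14*u^8 + 2592*m^14*u^8*x - 1680*m^14*u^10 - 288*m^14*u^10*x - 112*m^14*u^12 + 16*m^14*u^14 + 672*m^15*u - 576*m^15*u*x + 12864*m^15*u^3 + 1920*m^15*u^3*x - 14688*m^15*u^5 - 2304*m^15*u^5*x - 768*m^15*u^7 + 1152*m^15*u^7*x + 4704*m^15*u^9 - 192*m^15*u^9*x - 1344*m^15*u^11 + 96*m^15*u^13 + 48*m^16 - 48*m^16*x + 3984*m^16*u^2 + 192*m^16*u^2*x + 80*m^16*u^4 - 288*m^16*u^4*x - 11040*m^16*u^6 + 192*m^16*u^6*x + 9744*m^16*u^8 - 48*m^16*u^8*x - 2800*m^16*u^10 + 240*m^16*u^12 + 672*m^17*u + 2752*m^17*u^3 - 9280*m^17*u^5 + 8448*m^17*u^7 - 2912*m^17*u^9 + 320*m^17*u^11 + 48*m^18 + 1200*m^18*u^2 - 3744*m^18*u^4 + 3936*m^18*u^6 - 1680*m^18*u^8 + 240*m^18*u^10 + 224*m^19*u - 768*m^19*u^3 + 960*m^19*u^5 - 512*m^19*u^7 + 96*m^19*u^9 + 16*m^20 - 64*m^20*u^2 + 96*m^20*u^4 - 64*m^20*u^6 + 16*m^20*u^8).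

Lemma fwd_id m u t w : t <> 0 ->
  (yfun m u t w ^ 2 - xfun m u t w * (xfun m u t w - nmu m u) * (xfun m u t w - nmu m u * (u^2+1))) * (64 * t^6)
  = Gpol m u t w * (w^2 - Qmu m u t).
Proof. intros. unfold yfun, xfun, cmu, nmu, Kmu, Qmu, Gpol. field. auto. Qed.

Lemma bwd_id m u x y : Kmu m u <> 0 -> m <> 0 -> lineL m u x y <> 0 ->
  (wfun m u x y ^ 2 - Qmu m u (tfun m u x y)) * (Kmu m u ^ 2 * m^2 * lineL m u x y ^ 4)
  = Hpol m u x y * (y^2 - x * (x - nmu m u) * (x - nmu m u * (u^2+1))).
Proof. intros hK hm hL. unfold wfun, tfun, Qmu, Hpol. unfold lineL, nmu, cmu in *. unfold Kmu in *.
  field. auto. Qed.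

Lemma even_pos x n : x <> 0 -> 0 < (x^2)^n.
Proof. intros. apply pow_lt. replace (x^2) with (Rsqr x) by (unfold Rsqr; ring). now apply Rsqr_pos_lt. Qed.

Lemma K_pos m u : 0 < m -> 0 < u -> m*u < 1 -> 0 < Kmu m u.
Proof. intros. unfold Kmu. assert (m*u*u < u) by nra. nra. Qed.

Lemma lineL_xy m u t w : t <> 0 ->
  lineL m u (xfun m u t w) (yfun m u t w) = - m * Kmu m u * (xfun m u t w - cmu m u) / t.
Proof. intros. unfold lineL, yfun. field. auto. Qed.

Lemma part2a m u t w : 0 < m -> 0 < u -> m*u < 1 -> t <> 0 -> w ^ 2 = Qmu m u t ->
      onE m u (xfun m u t w) (yfun m u t w) /\
      (lineL m u (xfun m u t w) (yfun m u t w) <> 0 ->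
         tfun m u (xfun m u t w) (yfun m u t w) = t /\
         wfun m u (xfun m u t w) (yfun m u t w) = w).
Proof.
  intros hm hu hmu ht hw. pose proof (K_pos m u hm hu hmu) as hK.
  split.
  - unfold onE. pose proof (fwd_id m u t w ht) as E. rewrite hw, Rminus_diag, Rmult_0_r in E.
    apply Rmult_integral in E. destruct E as [E|E]; [lra|].
    exfalso. assert (0 < t^6) by (replace (t^6) with ((t^2)^3) by ring; now apply even_pos). lra.
  - intros hL. rewrite lineL_xy in hL by auto.
    assert (xfun m u t w - cmu m u <> 0).
    { intro h0. apply hL. rewrite h0. field. auto. }
    split.
    + unfold tfun. rewrite lineL_xy by auto. field. repeat split; auto; lra.
    + unfold wfun. unfold tfun. rewrite lineL_xy by auto.
      replace (- (m * Kmu m u * (xfun m u t w - cmu m u)) / (- m * Kmu m u * (xfun m u t w - cmu m u) / t))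
        with t by (field; repeat split; auto; lra).
      unfold xfun. field. split; lra.
Qed.

Lemma part2b m u x y : 0 < m -> 0 < u -> m*u < 1 -> onE m u x y -> lineL m u x y <> 0 ->
  tfun m u x y <> 0 ->
      (wfun m u x y) ^ 2 = Qmu m u (tfun m u x y) /\
      xfun m u (tfun m u x y) (wfun m u x y) = x /\
      yfun m u (tfun m u x y) (wfun m u x y) = y.
Proof.
  intros hm hu hmu hE hL hT. pose proof (K_pos m u hm hu hmu) as hK.
  assert (hX : xfun m u (tfun m u x y) (wfun m u x y) = x).
  { unfold xfun. unfold wfun at 1. field. repeat split; auto; lra. }
  split; [|split; auto].
  - pose proof (bwd_id m u x y ltac:(lra) ltac:(lra) hL) as E. unfold onE in hE.
    rewrite hE, Rminus_diag, Rmult_0_r in E.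
    apply Rmult_integral in E. destruct E as [E|E]; [lra|].
    exfalso. assert (0 < Kmu m u ^ 2 * m^2 * lineL m u x y ^ 4).
    { apply Rmult_lt_0_compat; [apply Rmult_lt_0_compat|]; try (apply pow_lt; lra).
      replace (lineL m u x y ^ 4) with ((lineL m u x y ^ 2)^2) by ring.
      now apply even_pos. }
    lra.
  - unfold yfun. rewrite hX.
    assert (x - cmu m u <> 0).
    { intro h0. apply hT. unfold tfun. rewrite h0. field. auto. }
    unfold tfun. unfold lineL in *. field. repeat split; auto; lra.
Qed.

Lemma part1b m u a b c a' b' c' : 0 < m -> 0 < u -> heron_mu m u a b c -> heron_mu m u a' b' c' ->
      rparam (alpha a b c) = rparam (alpha a' b' c') -> a = a' /\ b = b' /\ c = c'.
Proof.
  intros hm hu H H' E.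
  destruct (forward m u a b c hm hu H) as (_&_&_&_&_&_&_&_&_&_&ha&hb&hc).
  destruct (forward m u a' b' c' hm hu H') as (_&_&_&_&_&_&_&_&_&_&ha'&hb'&hc').
  rewrite E in ha, hb, hc.
  destruct H as ((Ht&_)&_). destruct H' as ((Ht'&_)&_). unfold htri in Ht, Ht'.
  repeat split; apply cosh_inj; try lra; congruence.
Qed.

Definition d3p (m u : R) : R := (- 64*m*u^4 - 96*m^2*u^3 + 96*m^2*u^5 - 32*m^3*u^2 - 32*m^3*u^6 - 160*m^4*u^3 + 160*m^4*u^5 - 64*m^5*u^2 + 192*m^5*u^4 - 64*m^5*u^6 - 32*m^6*u^3 + 32*m^6*u^5 - 32*m^7*u^2 + 128*m^7*u^4 - 32*m^7*u^6 + 32*m^8*u^3 - 32*m^8*u^5).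
Definition d4p (m u : R) : R := (16*u^4 + 128*m^2*u^4 + 64*m^3*u^3 - 64*m^3*u^5 + 16*m^4*u^2 + 192*m^4*u^4 + 16*m^4*u^6 + 128*m^5*u^3 - 128*m^5*u^5 + 32*m^6*u^2 + 64*m^6*u^4 + 32*m^6*u^6 + 64*m^7*u^3 - 64*m^7*u^5 + 16*m^8*u^2 - 16*m^8*u^4 + 16*m^8*u^6).

Lemma d4_pos m u : 0 < u -> 0 < d4p m u.
Proof.
  intros hu.
  assert (d4p m u = 16 * u^2 * (m^2+1)^2 * ((m * Kmu m u)^2 + (u*(m^2+1))^2)) by (unfold d4p, Kmu; ring).
  rewrite H. assert (0 < u*(m^2+1)) by nra.
  assert (0 < (m * Kmu m u)^2 + (u*(m^2+1))^2) by nra.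
  assert (0 < u^2*(m^2+1)^2) by nra. nra.
Qed.

Lemma line_t m u t w : 0 < m -> 0 < u -> m*u < 1 -> t <> 0 -> w^2 = Qmu m u t ->
  xfun m u t w = cmu m u -> d3p m u + d4p m u * t = 0.
Proof.
  intros hm hu hmu ht hw hx. pose proof (K_pos m u hm hu hmu) as hK.
  assert (E : Kmu m u * m * w = 4*t^2*cmu m u - Kmu m u *
     (- 4 * (m * u - 1) * (m + u) * m * t + 2 * (m ^ 2 * u ^ 2 + m ^ 2 - 2 * m * u + 2) * m * t ^ 2
      + 2 * Kmu m u * m ^ 2)).
  { rewrite <- hx. unfold xfun. field. auto. }
  assert (I : (4*t^2*cmu m u - Kmu m u *
     (- 4 * (m * u - 1) * (m + u) * m * t + 2 * (m ^ 2 * u ^ 2 + m ^ 2 - 2 * m * u + 2) * m * t ^ 2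
      + 2 * Kmu m u * m ^ 2))^2 - (Kmu m u)^2 * m^2 * Qmu m u t = t^3 * (d3p m u + d4p m u * t)).
  { unfold cmu, Kmu, Qmu, d3p, d4p. ring. }
  rewrite <- E in I. replace ((Kmu m u * m * w)^2) with ((Kmu m u)^2 * m^2 * w^2) in I by ring.
  rewrite hw, Rminus_diag in I.
  symmetry in I. apply Rmult_integral in I. destruct I as [I|I]; auto.
  exfalso. apply (pow_nonzero t 3 ht). auto.
Qed.

Lemma pos_sq_eq x y : 0 < x -> 0 < y -> x^2 = y^2 -> x = y.
Proof. intros. nra. Qed.

Lemma part3a m u a b c : IsRatR m -> IsRatR u -> 0 < m -> 0 < u -> m*u < 1 -> heron_mu m u a b c ->
      IsRatR (Fx m u a b c) /\ IsRatR (Fy m u a b c) /\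
      onE m u (Fx m u a b c) (Fy m u a b c) /\
      (good_point m u (Fx m u a b c) (Fy m u a b c) \/
       (Fx m u a b c = Px m u /\ Fy m u a b c = Py m u)).
Proof.
  intros hmq huq hm hu hmu H.
  destruct (part1a m u a b c hmq huq hm hu H) as (tq & tA & wq & wp & wQ).
  unfold Fx, Fy. set (t := rparam (alpha a b c)) in *. set (w := wtri m u a b c) in *.
  assert (ht : t <> 0) by (destruct tA; lra).
  destruct (part2a m u t w hm hu hmu ht (eq_sym wQ)) as [hE hinv].
  assert (rx : IsRatR (xfun m u t w)) by (unfold xfun, Kmu; rat).
  assert (ry : IsRatR (yfun m u t w)) by (unfold yfun, Kmu, cmu, nmu; rat).
  split; [auto|split; [auto|split; [auto|]]].
  destruct (Req_dec (lineL m u (xfun m u t w) (yfun m u t w)) 0) as [h0|h0].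
  - right. rewrite lineL_xy in h0 by auto.
    assert (hx : xfun m u t w = cmu m u).
    { pose proof (K_pos m u hm hu hmu).
      assert (HZ : - m * Kmu m u * (xfun m u t w - cmu m u) = 0).
      { replace (- m * Kmu m u * (xfun m u t w - cmu m u)) with
          (- m * Kmu m u * (xfun m u t w - cmu m u) / t * t) by (field; auto).
        rewrite h0. ring. }
      apply Rmult_integral in HZ. destruct HZ as [HZ|HZ]; [nra|lra]. }
    split.
    + rewrite hx. reflexivity.
    + unfold yfun. rewrite hx. unfold Py, cmu, nmu, Kmu. field. auto.
  - left. destruct (hinv h0) as [e1 e2]. unfold good_point.
    repeat split; auto.
    + rewrite e1. destruct tA; auto.
    + rewrite e1. destruct tA; auto.
    + rewrite e2. auto.
Qed.

Lemma part3b m u a b c a' b' c' : IsRatR m -> IsRatR u -> 0 < m -> 0 < u -> m*u < 1 ->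
  heron_mu m u a b c -> heron_mu m u a' b' c' ->
  Fx m u a b c = Fx m u a' b' c' -> Fy m u a b c = Fy m u a' b' c' ->
  a = a' /\ b = b' /\ c = c'.
Proof.
  intros hmq huq hm hu hmu H H' ex ey.
  apply (part1b m u a b c a' b' c' hm hu H H').
  destruct (part1a m u a b c hmq huq hm hu H) as (tq & tA & wq & wp & wQ).
  destruct (part1a m u a' b' c' hmq huq hm hu H') as (tq' & tA' & wq' & wp' & wQ').
  unfold Fx, Fy in *.
  set (t := rparam (alpha a b c)) in *. set (w := wtri m u a b c) in *.
  set (t' := rparam (alpha a' b' c')) in *. set (w' := wtri m u a' b' c') in *.
  assert (ht : t <> 0) by (destruct tA; lra).
  assert (ht' : t' <> 0) by (destruct tA'; lra).
  destruct (part2a m u t w hm hu hmu ht (eq_sym wQ)) as [hE hinv].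
  destruct (part2a m u t' w' hm hu hmu ht' (eq_sym wQ')) as [hE' hinv'].
  destruct (Req_dec (lineL m u (xfun m u t w) (yfun m u t w)) 0) as [h0|h0].
  - assert (h0' : lineL m u (xfun m u t' w') (yfun m u t' w') = 0) by (rewrite <- ex, <- ey; auto).
    pose proof (K_pos m u hm hu hmu).
    assert (hx : forall t w, t <> 0 -> lineL m u (xfun m u t w) (yfun m u t w) = 0 ->
               xfun m u t w = cmu m u).
    { intros t0 w0 ht0 hl. rewrite lineL_xy in hl by auto.
      assert (HZ : - m * Kmu m u * (xfun m u t0 w0 - cmu m u) = 0).
      { replace (- m * Kmu m u * (xfun m u t0 w0 - cmu m u)) with
          (- m * Kmu m u * (xfun m u t0 w0 - cmu m u) / t0 * t0) by (field; auto).
        rewrite hl. ring. }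
      apply Rmult_integral in HZ. destruct HZ as [HZ|HZ]; [nra|lra]. }
    pose proof (line_t m u t w hm hu hmu ht (eq_sym wQ) (hx t w ht h0)).
    pose proof (line_t m u t' w' hm hu hmu ht' (eq_sym wQ') (hx t' w' ht' h0')).
    pose proof (d4_pos m u hu). nra.
  - assert (h0' : lineL m u (xfun m u t' w') (yfun m u t' w') <> 0) by (rewrite <- ex, <- ey; auto).
    destruct (hinv h0) as [e1 _]. destruct (hinv' h0') as [e1' _].
    rewrite <- e1, <- e1', ex, ey. reflexivity.
Qed.

Lemma part3c m u x y : IsRatR m -> IsRatR u -> 0 < m -> 0 < u -> m*u < 1 -> good_point m u x y ->
      exists a b c, heron_mu m u a b c /\ Fx m u a b c = x /\ Fy m u a b c = y.
Proof.
  intros hmq huq hm hu hmu (xq & yq & hE & hL & hA & hW).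
  set (T := tfun m u x y) in *. set (W := wfun m u x y) in *.
  assert (hT : T <> 0) by (destruct hA; lra).
  destruct (part2b m u x y hm hu hmu hE hL hT) as (hQ & hx & hy). fold T W in hQ, hx, hy.
  assert (Tq : IsRatR T) by (unfold T, tfun, lineL, Kmu, cmu, nmu; rat).
  assert (Wq : IsRatR W) by (unfold W, wfun; fold T; unfold Kmu; rat).
  destruct (part1c m u T W hmq huq hm hu hmu Tq Wq hA hW (eq_sym hQ)) as (a & b & c & H & hTa).
  destruct (w_formula m u a b c hm hu H) as [wp wQ].
  rewrite hTa in wQ.
  assert (ew : wtri m u a b c = W) by (apply pos_sq_eq; auto; congruence).
  exists a, b, c. unfold Fx, Fy. rewrite hTa, ew. auto.
Qed.

Theorem theorem1 (m u : R) (Hmq : IsRatR m) (Huq : IsRatR u)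
  (Hm : 0 < m) (Hu : 0 < u) (Hmu : m * u < 1) :
  ((forall a b c, heron_mu m u a b c ->
      IsRatR (rparam (alpha a b c)) /\ condA m u (rparam (alpha a b c)) /\
      IsRatR (wtri m u a b c) /\ 0 < wtri m u a b c /\
      Qmu m u (rparam (alpha a b c)) = (wtri m u a b c) ^ 2) /\
   (forall a b c a' b' c', heron_mu m u a b c -> heron_mu m u a' b' c' ->
      rparam (alpha a b c) = rparam (alpha a' b' c') ->
      a = a' /\ b = b' /\ c = c') /\
   (forall t w, IsRatR t -> IsRatR w -> condA m u t -> 0 < w ->
      Qmu m u t = w ^ 2 ->
      exists a b c, heron_mu m u a b c /\ rparam (alpha a b c) = t)) /\
  ((forall t w, t <> 0 -> w ^ 2 = Qmu m u t ->
      onE m u (xfun m u t w) (yfun m u t w) /\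
      (lineL m u (xfun m u t w) (yfun m u t w) <> 0 ->
         tfun m u (xfun m u t w) (yfun m u t w) = t /\
         wfun m u (xfun m u t w) (yfun m u t w) = w)) /\
   (forall x y, onE m u x y -> lineL m u x y <> 0 -> tfun m u x y <> 0 ->
      (wfun m u x y) ^ 2 = Qmu m u (tfun m u x y) /\
      xfun m u (tfun m u x y) (wfun m u x y) = x /\
      yfun m u (tfun m u x y) (wfun m u x y) = y)) /\
  ((forall a b c, heron_mu m u a b c ->
      IsRatR (Fx m u a b c) /\ IsRatR (Fy m u a b c) /\
      onE m u (Fx m u a b c) (Fy m u a b c) /\
      (good_point m u (Fx m u a b c) (Fy m u a b c) \/
       (Fx m u a b c = Px m u /\ Fy m u a b c = Py m u))) /\
   (forall a b c a' b' c', heron_mu m u a b c -> heron_mu m u a' b' c' ->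
      Fx m u a b c = Fx m u a' b' c' -> Fy m u a b c = Fy m u a' b' c' ->
      a = a' /\ b = b' /\ c = c') /\
   (forall x y, good_point m u x y ->
      exists a b c, heron_mu m u a b c /\ Fx m u a b c = x /\ Fy m u a b c = y)).
Proof.
  split; [split; [|split]|split; [split|split; [|split]]].
  - intros. now apply part1a.
  - intros. now apply (part1b m u a b c).
  - intros t w ? ? ? ? ?. now apply (part1c m u t w).
  - intros. now apply part2a.
  - intros. now apply part2b.
  - intros. now apply part3a.
  - intros. now apply (part3b m u a b c).
  - intros x y ?. now apply (part3c m u x y).
Qed.
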